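(* Let $W:\mathcal{X}\to\mathcal{Z}$ be a discrete memoryless channel and let $P_X\in\mathcal{P}_n(\mathcal{X})$. Let $\mathcal{C}_X$ be a codebook of size $M_X$ all of whose codewords lie in the type class $T_{P_X}$, with decoding sets (pairwise disjoint subsets of $\mathcal{Z}^n$), and suppose the distinct sequences in $\mathcal{C}_X$ are $\mathbf{x}_1,\dots,\mathbf{x}_M$, with $\mathbf{x}_i$ occurring $N_i$ times, $M_X=N_1+\cdots+N_M$, and $N_M\ge 2$. If $M_X\le|T_{P_X}|-1$, then there exist a sequence $\mathbf{x}\in T_{P_X}\setminus\{\mathbf{x}_1,\dots,\mathbf{x}_M\}$ and a codebook $\mathcal{C}'_X$ with decoding sets such that $|\mathcal{C}'_X|=|\mathcal{C}_X|$, $\mathcal{C}'_X$ contains $\mathbf{x}_i$ exactly $N'_i=N_i$ times for $i=1,\dots,M-1$, contains $\mathbf{x}_M$ exactly $N'_M=N_M-1$ times, contains $\mathbf{x}$ exactly once ($N'_{M+1}=1$), and $e(\mathcal{C}'_X,W)\le e(\mathcal{C}_X,W)$.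
   Context: $T_{P_X}$ denotes the set of sequences in $\mathcal{X}^n$ of type $P_X$, i.e. with empirical distribution $P_X$. For a single-user codebook $\mathcal{C}_X=(\mathbf{x}'_1,\dots,\mathbf{x}'_{M_X})$ (a list, possibly with repetitions) with pairwise disjoint decoding sets $D_1,\dots,D_{M_X}\subset\mathcal{Z}^n$, the average error probability is $e(\mathcal{C}_X,W)=\frac1{M_X}\sum_{m=1}^{M_X}W^n(D_m^c|\mathbf{x}'_m)$, where $W^n(\mathbf z|\mathbf x)=\prod_{t}W(z_t|x_t)$. *)

(* Defs.v *)
From HB Require Import structures.
From mathcomp Require Import all_boot all_order all_algebra.
Set Implicit Arguments. Unset Strict Implicit. Unset Printing Implicit Defensive.
Import Order.TTheory GRing.Theory Num.Theory.
Local Open Scope ring_scope.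

(* A DMC W : X -> Z, W x z = W(z|x). *)
Definition is_channel (R : realFieldType) (X Z : finType) (W : X -> Z -> R) :=
  (forall x z, 0 <= W x z) /\ (forall x, \sum_(z : Z) W x z = 1).

Definition Wn (R : realFieldType) (X Z : finType) (W : X -> Z -> R) (n : nat)
  (x : n.-tuple X) (z : n.-tuple Z) : R :=
  \prod_(i < n) W (tnth x i) (tnth z i).

Definition is_ntype (R : realFieldType) (X : finType) (n : nat) (P : X -> R) :=
  exists k : X -> nat, (\sum_(a : X) k a)%N = n /\ forall a, P a = (k a)%:R / n%:R.

Definition type_class (R : realFieldType) (X : finType) (n : nat) (P : X -> R)
  : {set n.-tuple X} :=
  [set x : n.-tuple X | [forall a : X, (count_mem a x)%:R / n%:R == P a]].

Definition disjoint_dec (Z : finType) (n M : nat) (D : 'I_M -> {set n.-tuple Z}) :=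
  forall m m' : 'I_M, m != m' -> [disjoint D m & D m'].

Definition avg_err (R : realFieldType) (X Z : finType) (W : X -> Z -> R) (n M : nat)
  (C : 'I_M -> n.-tuple X) (D : 'I_M -> {set n.-tuple Z}) : R :=
  M%:R^-1 * \sum_(m < M) \sum_(z in ~: D m) Wn W (C m) z.

Definition mult (X : finType) (n M : nat) (C : 'I_M -> n.-tuple X) (y : n.-tuple X) : nat :=
  #|[set m : 'I_M | C m == y]|.

(* Main.v *)
Require Import Defs.
From HB Require Import structures.
From mathcomp Require Import all_boot all_order all_algebra.
Import Order.TTheory GRing.Theory Num.Theory.
Local Open Scope ring_scope.

Lemma Wn_sum1 (R : realFieldType) (X Z : finType) (W : X -> Z -> R) (n : nat)
  (x : n.-tuple X) : is_channel W -> \sum_(z : n.-tuple Z) Wn W x z = 1.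
Proof.
case=> _ H1.
transitivity (\prod_(i < n) \sum_(z : Z) W (tnth x i) z); last first.
  by rewrite big1 // => i _; rewrite H1.
rewrite bigA_distr_bigA /=.
rewrite (reindex (fun z : n.-tuple Z => [ffun i => tnth z i])) /=.
  by apply: eq_bigr => z _; apply: eq_bigr => i _; rewrite ffunE.
exists (fun f : {ffun 'I_n -> Z} => [tuple f i | i < n]) => [z _|f _].
  by apply: eq_from_tnth => i; rewrite tnth_mktuple ffunE.
by apply/ffunP => i; rewrite ffunE tnth_mktuple.
Qed.

Lemma sumC (R : realFieldType) (T : finType) (A : {set T}) (g : T -> R) :
  \sum_(z in ~: A) g z = \sum_z g z - \sum_(z in A) g z.
Proof.
rewrite (bigID (mem A) predT) /= addrC addrK.
by apply: eq_bigl => z; rewrite in_setC.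
Qed.

Lemma disjU (T:finType)(A B C:{set T}) :
  [disjoint A :|: B & C] = [disjoint A & C] && [disjoint B & C].
Proof. by rewrite -!setI_eq0 setIUl setU_eq0. Qed.

Lemma split2 (R : realFieldType) (N : nat) (m1 m2 : 'I_N) (F : 'I_N -> R) :
  m2 != m1 ->
  \sum_(m < N) F m = F m1 + F m2 + \sum_(m < N | (m != m1) && (m != m2)) F m.
Proof.
move=> ne; rewrite (bigD1 m1) //= (bigD1 m2) ?ne //= addrA.
by congr (_ + _); apply: eq_bigl => i.
Qed.
Theorem lemma3 (R : realFieldType) (X Z : finType) (W : X -> Z -> R) (n : nat)
  (P : X -> R) (MX : nat) (C : 'I_MX -> n.-tuple X) (D : 'I_MX -> {set n.-tuple Z})
  (xM : n.-tuple X) :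
  is_channel W ->
  is_ntype n P ->
  (forall m, C m \in type_class n P) ->
  disjoint_dec D ->
  (2 <= mult C xM)%N ->
  (MX <= #|type_class n P| - 1)%N ->
  exists (x : n.-tuple X) (C' : 'I_MX -> n.-tuple X) (D' : 'I_MX -> {set n.-tuple Z}),
    [/\ x \in type_class n P, mult C x = 0%N & disjoint_dec D'] /\
    [/\
          (forall y, y != xM -> y != x -> mult C' y = mult C y),
        mult C' xM = (mult C xM).-1,
        mult C' x = 1%N
      & avg_err W C' D' <= avg_err W C D].
Proof.
move=> HW _ HC HD H2 HMX.
set S := [set m | C m == xM].
have cS : #|S| = mult C xM by [].
have [m1 m1S] : exists m1, m1 \in S.
  by apply/set0Pn; rewrite -card_gt0 cS; apply: leq_trans H2.
have [m2 m2S] : exists m2, m2 \in S :\ m1.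
  apply/set0Pn; rewrite -card_gt0.
  by move: H2; rewrite -cS (cardsD1 m1) m1S.
move: m2S; rewrite !inE => /andP [ne21 /eqP C2].
move: m1S; rewrite inE => /eqP C1.
have MXle : (MX <= #|'I_MX|)%N by rewrite card_ord.
have [x xT xC] : exists2 x, x \in type_class n P & x \notin (C @: setT).
  apply/exists_inP; rewrite -negb_forall_in; apply/negP => /forall_inP Hsub.
  have : (#|type_class n P| <= #|C @: setT|)%N by apply/subset_leq_card/subsetP.
  have : (#|C @: setT| <= MX)%N.
    by apply: leq_trans (leq_imset_card _ _) _; rewrite cardsT card_ord.
  move=> a b; have := leq_trans b a.
  have : (1 < MX)%N.
    apply: leq_trans H2 _; rewrite -cS; have := max_card (mem S); rewrite card_ord //.
  move: HMX; case: #|type_class n P| => [|k] /=.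
    by rewrite leqn0 => /eqP ->.
  rewrite subn1 /= => c d e; move: (leq_trans e c).
  by rewrite ltnn.
have xC' : forall m, C m != x.
  by move=> m; apply: contraNneq xC => <-; apply: imset_f.
have multx : mult C x = 0%N.
  by apply/eqP; rewrite cards_eq0; apply/eqP/setP => m; rewrite !inE (negbTE (xC' m)).
set C' := fun m => if m == m2 then x else C m.
set D' := fun m => if m == m2 then set0 else if m == m1 then D m1 :|: D m2 else D m.
exists x, C', D'; split; first split => //.
- move=> m m' nmm'; rewrite /D'.
  have [e2|nm2] := eqVneq m m2; first by rewrite -setI_eq0 set0I.
  have [e2|nm'2] := eqVneq m' m2; first by rewrite -setI_eq0 setI0.
  have [e1|nm1] := eqVneq m m1; have [e1'|nm'1] := eqVneq m' m1.
  + by move: nmm'; rewrite e1 e1' eqxx.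
  + by rewrite disjU !HD // ?(eq_sym m2) // -e1.
  + by rewrite disjoint_sym disjU !(disjoint_sym _ (D m)) !HD // ?(eq_sym m2) // -e1' eq_sym.
  + exact: HD.
split.
- move=> y ny nx; rewrite /mult; apply: eq_card => m; rewrite !inE /C' /=.
  have [->|//] := eqVneq m m2.
  by rewrite C2 !(eq_sym _ y) (negbTE ny) (negbTE nx).
- rewrite -cS (cardsD1 m2) [m2 \in _]inE C2 eqxx /= /mult.
  apply: eq_card => m; rewrite !inE /C' /=; have [->|//] := eqVneq m m2.
  by rewrite -{1}C2 eq_sym (negbTE (xC' _)).
- rewrite /mult -(cards1 m2); apply: eq_card => m; rewrite !inE /C' /=.
  by case: (m == m2); rewrite ?eqxx // (negbTE (xC' _)).
rewrite /avg_err ler_wpM2l ?invr_ge0 ?ler0n //.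
rewrite !(@split2 _ _ m1 m2 _ ne21) lerD // ?le_eqVlt; last first.
  by apply/orP; left; apply/eqP; apply: eq_bigr => m /andP [nm1 nm2];
    rewrite /C' /D' (negbTE nm1) (negbTE nm2).
have ne12 : m1 != m2 by rewrite eq_sym.
rewrite /C' /D' /= (negbTE ne12) !eqxx setC0.
rewrite C1 C2.
apply/orP; left; apply/eqP.
rewrite -setC0 !sumC big_set0 subr0 (@Wn_sum1 _ _ _ _ _ x HW) (@Wn_sum1 _ _ _ _ _ xM HW).
rewrite (big_setID (D m1)).
have -> : (D m1 :|: D m2) :&: D m1 = D m1.
  by apply/setP=> z; rewrite !inE; apply/idP/idP => [/andP[]|h]; rewrite ?h.
have -> : (D m1 :|: D m2) :\: D m1 = D m2.
  apply/setP=> z; rewrite !inE; case h: (z \in D m2).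
    by rewrite (disjointFl (HD _ _ ne12) h).
  by rewrite orbF andNb.
rewrite /=; set s1 := \sum_(i in D m1) _; set s2 := \sum_(i in D m2) _.
rewrite opprD addrA addrAC (addrA (1 - s1)) -!addrA; congr (1 + _); by rewrite addrC -addrA.

Qed.
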